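(* Let $\Gamma=(V,E)$ be a reflexive locally finite $2$-faithful degenerate graph and let $X$ and $Y$ be $2$-atoms of $\Gamma$. Then $$|\partial(X\cap Y)|\le|\Gamma(X)\cap\Gamma(Y)|-|X\cap Y|\le\kappa_2(\Gamma),$$ and $$|\nabla(X)\setminus\nabla(Y)|\le|Y\setminus X|+\kappa_2(\Gamma)-|\partial(X\cap Y)|.$$
   Context: A graph is a pair $\Gamma=(V,E)$ with $E\subseteq V\times V$; reflexive means $(x,x)\in E$ for all $x$; $\Gamma(x)=\{y:(x,y)\in E\}$, $\Gamma(X)=\bigcup_{x\in X}\Gamma(x)$; the reverse graph is $\Gamma^-=(V,E^-)$, $E^-=\{(x,y):(y,x)\in E\}$; locally finite means $\Gamma(x)$, $\Gamma^-(x)$ finite for all $x$. $\partial(X)=\Gamma(X)\setminus X$, $\nabla(X)=V\setminus\Gamma(X)$. $\Gamma$ is $k$-separable if there is a finite $X$ with $|X|\ge k$, $|\nabla(X)|\ge k$; then $\kappa_k(\Gamma)=\min\{|\partial(X)|: X\text{ finite},|X|\ge k,|\nabla(X)|\ge k\}$. A $k$-fragment is a finite $X$ with $|X|\ge k$, $|\nabla(X)|\ge k$, $|\partial(X)|=\kappa_k(\Gamma)$; a $k$-atom is a $k$-fragment of minimum cardinality. $\Gamma$ is $k$-faithful if $|A|\le|\nabla(A)|$ for a $k$-atom $A$. $\Gamma$ is degenerate if it is $2$-separable and $\kappa_2(\Gamma)=\kappa_1(\Gamma)$. *)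

(* Defs.v *)
From HB Require Import structures.
From mathcomp Require Import all_boot.
From mathcomp Require Import finmap.
From mathcomp Require Import boolp classical_sets cardinality.

Set Implicit Arguments.
Unset Strict Implicit.
Unset Printing Implicit Defensive.

Local Open Scope classical_set_scope.
Local Open Scope fset_scope.

Section GraphDefs.
Variable V : choiceType.
Variable E : V -> V -> Prop.

(* cardinality of a finite set (only meaningful for finite sets) *)
Definition vcard (A : set V) : nat := #|` fset_set A|.

(* |A| >= k, for an arbitrary (possibly infinite) set A *)
Definition atleast (k : nat) (A : set V) : Prop :=
  exists B : {fset V}, (forall x, x \in B -> A x) /\ (k <= #|` B|)%N.

Definition reflexiveG : Prop := forall x, E x x.

Definition nbr (X : set V) : set V := [set y | exists2 x, X x & E x y].
Definition innbr (x : V) : set V := [set y | E y x].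

Definition locally_finite : Prop :=
  forall x, finite_set (nbr [set x]) /\ finite_set (innbr x).

Definition bnd (X : set V) : set V := nbr X `\` X.
Definition nabla (X : set V) : set V := ~` nbr X.

Definition admissible (k : nat) (X : set V) : Prop :=
  finite_set X /\ (k <= vcard X)%N /\ atleast k (nabla X).

Definition separable (k : nat) : Prop := exists X, admissible k X.

Definition is_kappa (k n : nat) : Prop :=
  (exists2 X, admissible k X & vcard (bnd X) = n) /\
  (forall X, admissible k X -> (n <= vcard (bnd X))%N).

(* kappa_k(Gamma); well defined (the minimum exists) when Gamma is k-separable *)
Definition kappa (k : nat) : nat := xget 0%N [set n | is_kappa k n].

Definition fragment (k : nat) (X : set V) : Prop :=
  admissible k X /\ vcard (bnd X) = kappa k.

Definition atom (k : nat) (A : set V) : Prop :=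
  fragment k A /\ (forall B, fragment k B -> (vcard A <= vcard B)%N).

Definition faithful (k : nat) : Prop :=
  exists A, atom k A /\ atleast (vcard A) (nabla A).

Definition degenerate : Prop := separable 2 /\ kappa 2 = kappa 1.

End GraphDefs.

(* Main.v *)
Require Import Defs.
From HB Require Import structures.
From mathcomp Require Import all_boot.
From mathcomp Require Import finmap.
From mathcomp Require Import boolp classical_sets cardinality.
From mathcomp Require Import zify.
Set Implicit Arguments.
Unset Strict Implicit.
Local Open Scope classical_set_scope.
Section Card.
Variable T : choiceType.
Implicit Types A B : set T.

Lemma vcardUI A B : finite_set A -> finite_set B ->
  (vcard (A `|` B) + vcard (A `&` B) = vcard A + vcard B)%N.
Proof. by move=> fA fB; rewrite /vcard fset_setU // fset_setI // cardfsUI. Qed.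

Lemma vcard_le A B : A `<=` B -> finite_set B -> (vcard A <= vcard B)%N.
Proof.
move=> AB fB; have fA := sub_finite_set AB fB.
by rewrite /vcard; apply: fsubset_leq_card; rewrite -fset_set_sub.
Qed.

Lemma vcard0 : vcard (set0 : set T) = 0%N.
Proof. by rewrite /vcard fset_set0. Qed.

Lemma vcardDI A B : finite_set A ->
  (vcard (A `\` B) + vcard (A `&` B) = vcard A)%N.
Proof.
move=> fA.
have fD : finite_set (A `\` B) by apply: finite_setD.
have fI : finite_set (A `&` B) by apply: finite_setIl.
rewrite -vcardUI //.
have -> : (A `\` B) `|` (A `&` B) = A.
  by apply/seteqP; split=> x /=; [case=> -[] | move=> Ax; have [Bx|nBx] := pselect (B x); [right|left]].
have -> : (A `\` B) `&` (A `&` B) = set0.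
  by apply/seteqP; split=> x //= [[_ nB] [_ Bx]].
by rewrite vcard0 addn0.
Qed.

Lemma atleast_le k A : finite_set A -> atleast k A -> (k <= vcard A)%N.
Proof.
move=> fA [B [BA kB]]; apply: (leq_trans kB); rewrite /vcard.
by apply: fsubset_leq_card; apply/fsubsetP => x xB; rewrite in_fset_set // inE; apply: BA.
Qed.
End Card.
Section G.
Variables (V : choiceType) (E : V -> V -> Prop).

Lemma nbr_fin X : locally_finite E -> finite_set X -> finite_set (nbr E X).
Proof.
move=> hlf fX.
have -> : nbr E X = \bigcup_(x in X) nbr E [set x].
  apply/seteqP; split=> y /=.
    by case=> x Xx Exy; exists x => //; exists x.
  by case=> x Xx [x' /= -> Exy]; exists x.
by apply: bigcup_finite => // x _; case: (hlf x).
Qed.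

Lemma sub_nbr X : reflexiveG E -> X `<=` nbr E X.
Proof. by move=> hr x Xx; exists x. Qed.

Lemma nbrU X Y : nbr E (X `|` Y) = nbr E X `|` nbr E Y.
Proof.
apply/seteqP; split=> y /=.
  by case=> x [Xx|Yx] Exy; [left|right]; exists x.
by case=> -[x Xx Exy]; exists x => //; [left|right].
Qed.

Lemma nbrI_sub X Y : nbr E (X `&` Y) `<=` nbr E X `&` nbr E Y.
Proof. by move=> y [x [Xx Yx] Exy]; split; exists x. Qed.

Lemma kappaP k : separable E k -> is_kappa E k (kappa E k).
Proof.
move=> [X0 hX0].
pose P n := `[< exists2 X, admissible E k X & vcard (bnd E X) = n >].
have exP : exists n, P n by exists (vcard (bnd E X0)); apply/asboolP; exists X0.
have [m Pm minm] := ex_minnP exP.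
rewrite /kappa; apply: xgetPex; exists m; split.
  by move/asboolP: Pm.
by move=> X hX; apply: minm; apply/asboolP; exists X.
Qed.
End G.

Lemma vcard_nbr (V : choiceType) (E : V -> V -> Prop) X :
  reflexiveG E -> locally_finite E -> finite_set X ->
  vcard (nbr E X) = (vcard X + vcard (bnd E X))%N.
Proof.
move=> hr hlf fX; have fN := nbr_fin hlf fX.
rewrite -(vcardDI X fN) addnC /bnd; congr (_ + _)%N.
by congr vcard; apply/seteqP; split=> x /=; [case | move=> Xx; split => //; apply: sub_nbr].
Qed.

Theorem lemma5p2 (V : choiceType) (E : V -> V -> Prop)
  (hrefl : reflexiveG E) (hlf : locally_finite E)
  (hfaith : faithful E 2) (hdeg : degenerate E)
  (X Y : set V) (hX : atom E 2 X) (hY : atom E 2 Y) :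
  (vcard (bnd E (X `&` Y)) + vcard (X `&` Y) <= vcard (nbr E X `&` nbr E Y))%N /\
  (vcard (nbr E X `&` nbr E Y) <= vcard (X `&` Y) + kappa E 2)%N /\
  (vcard (nabla E X `\` nabla E Y) + vcard (bnd E (X `&` Y))
     <= vcard (Y `\` X) + kappa E 2)%N.
Proof.
have [[[fX [x2 atX]] bX] minX] := hX.
have [[[fY [y2 atY]] bY] minY] := hY.
have gX := nbr_fin hlf fX; have gY := nbr_fin hlf fY.
have cX := vcard_nbr hrefl hlf fX; have cY := vcard_nbr hrefl hlf fY.
rewrite bX in cX; rewrite bY in cY.
have eXY : vcard X = vcard Y.
  by apply/eqP; rewrite eqn_leq (minX _ hY.1) (minY _ hX.1).
have fI : finite_set (X `&` Y) by apply: finite_setIl.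
have c1 : (vcard (bnd E (X `&` Y)) + vcard (X `&` Y) <= vcard (nbr E X `&` nbr E Y))%N.
  rewrite addnC -vcard_nbr //; apply: vcard_le; first exact: nbrI_sub.
  exact: finite_setIl.
have c2 : (vcard (nbr E X `&` nbr E Y) <= vcard (X `&` Y) + kappa E 2)%N.
  have [[v hv]|hall] := pselect (exists v, ~ (nbr E X `|` nbr E Y) v).
  - have fU : finite_set (X `|` Y) by rewrite finite_setU.
    have adm : admissible E 1 (X `|` Y).
      split => //; split.
        apply: (leq_trans _ (vcard_le (@subsetUl _ X Y) fU)).
        exact: leq_trans x2.
      exists [fset v]%fset; split; last by rewrite cardfs1.
      by move=> x; rewrite inE => /eqP ->; rewrite /nabla nbrU.
    have sep1 : separable E 1.
      case: hdeg.1 => Z [fZ [z2 [B [BZ B2]]]]; exists Z; split => //; split.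
        exact: leq_trans z2.
      by exists B; split => //; apply: leq_trans B2.
    have k1 := (kappaP sep1).2 _ adm.
    rewrite -hdeg.2 in k1.
    have cU := vcard_nbr hrefl hlf fU.
    rewrite nbrU in cU.
    have u1 := vcardUI gX gY.
    have u2 := vcardUI fX fY.
    lia.
  - have hall' : forall v, (nbr E X `|` nbr E Y) v.
      by move=> v; apply: contrapT => hv; apply: hall; exists v.
    have [A [[[[fA [a2 atA]] bA] minA] hAt]] := hfaith.
    have fT : finite_set (@setT V).
      have -> : @setT V = nbr E X `|` nbr E Y by apply/seteqP; split=> x // _; apply: hall'.
      by rewrite finite_setU.
    have nA : finite_set (nabla E A) by apply: sub_finite_set fT.
    have lA := atleast_le nA hAt.
    have eAY : vcard A = vcard Y.
      by apply/eqP; rewrite eqn_leq (minA _ hY.1) minY //; split.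
    have cA := vcard_nbr hrefl hlf fA; rewrite bA in cA.
    have tA := vcardDI (nbr E A) fT; rewrite setTD setTI in tA.
    have tY := vcardDI (nbr E Y) fT; rewrite setTD setTI in tY.
    have dXY := vcardDI (nbr E Y) gX.
    have eD : nbr E X `\` nbr E Y = ~` nbr E Y.
      apply/seteqP; split=> x /=; first by case.
      by move=> nx; split => //; case: (hall' x).
    rewrite eD in dXY; rewrite /nabla in lA.
    lia.
split => //; split => //.
have dd := vcardDI (nbr E X) gY.
have -> : nabla E X `\` nabla E Y = nbr E Y `\` nbr E X.
  by apply/seteqP; split=> x /= [h1 h2]; split => //; apply: contrapT.
have d1 := vcardDI (nbr E X) gY.
have d2 := vcardDI X fY.
rewrite setIC in d1; rewrite setIC in d2.
lia.
Qed.
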